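(* Let $n\ge1$ be a natural number, let $a,b,\alpha,\beta$ be variables (with $\beta a-\alpha b\neq0$), and write $\Psi_r(n)=\Psi\left(\begin{array}{cc|c} a & b & n \\ \alpha & \beta & r \end{array}\right)$, $\Phi_r(n)=\Phi\left(\begin{array}{cc|c} a & b & n \\ \alpha & \beta & r \end{array}\right)$. Let $E=a\frac{\partial}{\partial \alpha}+b\frac{\partial}{\partial \beta}$ (so $a,b$ are held constant). Then \[ \Psi_r(n)=-\frac{1}{\lfloor n/2\rfloor-r}\,E\,\Psi_{r+1}(n)\quad\text{for }0\le r\le\lfloor n/2\rfloor-1, \] \[ \Phi_r(n)=-\frac{1}{\lfloor (n-1)/2\rfloor-r}\,E\,\Phi_{r+1}(n)\quad\text{for }0\le r\le\lfloor (n-1)/2\rfloor-1. \]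
   Context: $\delta(m)=1$ for $m$ odd, $0$ for $m$ even; $\lfloor\cdot\rfloor$ is the floor. For indeterminates $a,b,\alpha,\beta$ and $n\ge1$, $\Psi\left(\begin{array}{cc|c} a & b & n \\ \alpha & \beta & r \end{array}\right)$ ($0\le r\le\lfloor n/2\rfloor$) and $\Phi\left(\begin{array}{cc|c} a & b & n \\ \alpha & \beta & r \end{array}\right)$ ($0\le r\le\lfloor (n-1)/2\rfloor$) are the unique polynomials in $\mathbb{Z}[a,b,\alpha,\beta]$ such that, identically in $x,y$, $(\beta a-\alpha b)^{\lfloor n/2\rfloor}\frac{x^n+y^n}{(x+y)^{\delta(n)}}=\sum_{r}\Psi\left(\begin{array}{cc|c} a & b & n \\ \alpha & \beta & r \end{array}\right)(\alpha x^2+\beta xy+\alpha y^2)^{\lfloor n/2\rfloor-r}(ax^2+bxy+ay^2)^r$ and $(\beta a-\alpha b)^{\lfloor (n-1)/2\rfloor}\frac{x^n-y^n}{(x-y)(x+y)^{\delta(n-1)}}=\sum_{r}\Phi\left(\begin{array}{cc|c} a & b & n \\ \alpha & \beta & r \end{array}\right)(\alpha x^2+\beta xy+\alpha y^2)^{\lfloor (n-1)/2\rfloor-r}(ax^2+bxy+ay^2)^r$. *)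

(* Defs.v *)
From HB Require Import structures.
From mathcomp Require Import all_boot all_order all_algebra.
From mathcomp Require Import mpoly.
Set Implicit Arguments. Unset Strict Implicit. Unset Printing Implicit Defensive.
Import GRing.Theory.
Local Open Scope ring_scope.

Definition P4 := {mpoly int[4]}.
Definition va : P4 := 'X_(inord 0).
Definition vb : P4 := 'X_(inord 1).
Definition valpha : P4 := 'X_(inord 2).
Definition vbeta : P4 := 'X_(inord 3).

Definition PXY := {poly {poly P4}}.
Definition cst (c : P4) : PXY := c%:P%:P.
Definition vx : PXY := 'X.
Definition vy : PXY := ('X : {poly P4})%:P.

Definition delta (m : nat) : nat := odd m.

Definition Dab : P4 := vbeta * va - valpha * vb.
Definition Qalpha : PXY := cst valpha * vx ^+ 2 + cst vbeta * vx * vy + cst valpha * vy ^+ 2.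
Definition Qa : PXY := cst va * vx ^+ 2 + cst vb * vx * vy + cst va * vy ^+ 2.

(* The defining identity of Psi(a b n | alpha beta r), r = 0..floor(n/2),
   with the exact division by (x+y)^delta(n) cleared. *)
Definition is_Psi (n : nat) (P : nat -> P4) : Prop :=
  (vx + vy) ^+ delta n *
    (\sum_(r < (n./2).+1) cst (P r) * Qalpha ^+ (n./2 - r) * Qa ^+ r)
  = cst (Dab ^+ (n./2)) * (vx ^+ n + vy ^+ n).

(* The defining identity of Phi(a b n | alpha beta r), r = 0..floor((n-1)/2),
   with the exact division by (x-y)(x+y)^delta(n-1) cleared. *)
Definition is_Phi (n : nat) (P : nat -> P4) : Prop :=
  (vx - vy) * (vx + vy) ^+ delta n.-1 *
    (\sum_(r < (n.-1./2).+1) cst (P r) * Qalpha ^+ (n.-1./2 - r) * Qa ^+ r)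
  = cst (Dab ^+ (n.-1./2)) * (vx ^+ n - vy ^+ n).

Definition Eop (p : P4) : P4 :=
  va * mderiv (inord 2) p + vb * mderiv (inord 3) p.

(* Main.v *)
Require Import Defs.
From HB Require Import structures.
From mathcomp Require Import all_boot all_order all_algebra.
From mathcomp Require Import mpoly.
From mathcomp Require Import ring zify.
Import GRing.Theory.
Local Open Scope ring_scope.

Lemma mderivXi (i j : 'I_4) : mderiv j ('X_i : P4) = (i == j)%:R.
Proof.
rewrite mderivX mnm1E; case: eqP => [->|_]; last by rewrite scale0r.
have ->: (U_(j) - U_(j))%MM = 0%MM by apply/mnmP=> k; rewrite mnmBE mnm0E subnn.
by rewrite mpolyX0 scale1r.
Qed.

Lemma Eop_D p q : Eop (p + q) = Eop p + Eop q.
Proof. by rewrite /Eop !mderivD !mulrDr addrACA. Qed.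

Lemma Eop_M p q : Eop (p * q) = Eop p * q + p * Eop q.
Proof. rewrite /Eop !mderivM. ring. Qed.

Lemma inordE (i j : nat) : (i < 4)%N -> (j < 4)%N -> ((inord i : 'I_4) == inord j) = (i == j).
Proof. by move=> hi hj; rewrite -val_eqE /= !inordK. Qed.

Lemma Eop_a : Eop va = 0.
Proof. by rewrite /Eop /va !mderivXi !inordE //= !mulr0 addr0. Qed.
Lemma Eop_b : Eop vb = 0.
Proof. by rewrite /Eop /vb !mderivXi !inordE //= !mulr0 addr0. Qed.
Lemma Eop_alpha : Eop valpha = va.
Proof. by rewrite /Eop /valpha !mderivXi !inordE //= mulr1 mulr0 addr0. Qed.
Lemma Eop_beta : Eop vbeta = vb.
Proof. by rewrite /Eop /vbeta !mderivXi !inordE //= mulr1 mulr0 add0r. Qed.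
Section Der.
Context (S : comPzRingType) (d : S -> S)
  (dD : forall x y, d (x + y) = d x + d y)
  (dM : forall x y, d (x * y) = d x * y + x * d y).

Lemma der0 : d 0 = 0.
Proof. by apply/(addrI (d 0)); rewrite -dD !addr0. Qed.
Lemma derN x : d (- x) = - d x.
Proof. by apply/(addrI (d x)); rewrite -dD !subrr der0. Qed.
Lemma derB x y : d (x - y) = d x - d y.
Proof. by rewrite dD derN. Qed.
Lemma der1 : d 1 = 0.
Proof. by have := dM 1 1; rewrite !mul1r mulr1 => h; apply/(addrI (d 1)); rewrite addr0 -h. Qed.
Lemma der_sum (I : Type) (r : seq I) (P : pred I) (F : I -> S) :
  d (\sum_(i <- r | P i) F i) = \sum_(i <- r | P i) d (F i).
Proof. exact: (big_morph d dD der0). Qed.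
Lemma derX x k : d (x ^+ k) = x ^+ k.-1 * d x *+ k.
Proof.
elim: k => [|k IH]; first by rewrite expr0 der1 mulr0n.
rewrite exprS dM IH; case: k IH => [|k] IH.
  by rewrite /= expr0 mulr0n mulr0 addr0 mul1r mulr1 mulr1n.
rewrite /= mulrnAr mulrA -exprS mulrSr addrC mulrC.
by rewrite !mulrSr.
Qed.
End Der.

Section MapDer.
Context (R : comNzRingType) (f : R -> R)
  (fD : forall x y, f (x + y) = f x + f y)
  (fM : forall x y, f (x * y) = f x * y + x * f y).

Let f0 : f 0 = 0 := @der0 _ f fD.
Let f1 : f 1 = 0 := @der1 _ f fM.
Lemma mapD p q : map_poly f (p + q) = map_poly f p + map_poly f q.
Proof.
apply/polyP=> i; rewrite coefD !coef_map_id0 // //.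
by rewrite coefD fD.
Qed.

Lemma mapM p q : map_poly f (p * q) = map_poly f p * q + p * map_poly f q.
Proof.
apply/polyP=> i; rewrite coefD !coef_map_id0 // // !coefM.
rewrite (@der_sum _ f fD) -big_split /=; apply: eq_bigr=> j _.
by rewrite fM !coef_map_id0 //.
Qed.

Lemma mapC c : map_poly f c%:P = (f c)%:P.
Proof.
apply/polyP=> i; rewrite coef_map_id0 // // !coefC.
by case: (i == 0)%N => //; done.
Qed.

Lemma mapX : map_poly f 'X = 0.
Proof.
apply/polyP=> i; rewrite coef_map_id0 // // coefX coef0.
by case: (i == 1)%N.
Qed.
End MapDer.

Definition iE (p : {poly P4}) : {poly P4} := map_poly Eop p.
Definition dd (p : PXY) : PXY := map_poly iE p.

Lemma iED p q : iE (p + q) = iE p + iE q.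
Proof. exact: (@mapD _ Eop Eop_D). Qed.
Lemma iEM p q : iE (p * q) = iE p * q + p * iE q.
Proof. exact: (@mapM _ Eop Eop_D Eop_M). Qed.
Lemma ddD p q : dd (p + q) = dd p + dd q.
Proof. exact: (@mapD _ iE iED). Qed.
Lemma ddM p q : dd (p * q) = dd p * q + p * dd q.
Proof. exact: (@mapM _ iE iED iEM). Qed.
Lemma ddC c : dd (cst c) = cst (Eop c).
Proof. by rewrite /dd /cst (@mapC _ iE iED) /iE (@mapC _ Eop Eop_D). Qed.
Lemma ddx : dd vx = 0.
Proof. exact: (@mapX _ iE iED iEM). Qed.
Lemma ddy : dd vy = 0.
Proof. by rewrite /dd /vy (@mapC _ iE iED) /iE (@mapX _ Eop Eop_D Eop_M). Qed.

Lemma ddx2 : dd (vx ^+ 2) = 0.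
Proof. by rewrite (@derX _ dd ddM) ddx mulr0 mul0rn. Qed.
Lemma ddy2 : dd (vy ^+ 2) = 0.
Proof. by rewrite (@derX _ dd ddM) ddy mulr0 mul0rn. Qed.
Lemma ddxy : dd (vx * vy) = 0.
Proof. by rewrite ddM ddx ddy mulr0 mul0r addr0. Qed.

Lemma ddQgen (C1 C2 E1 E2 : PXY) : dd C1 = E1 -> dd C2 = E2 ->
  dd (C1 * vx ^+ 2 + C2 * vx * vy + C1 * vy ^+ 2) =
  E1 * vx ^+ 2 + E2 * vx * vy + E1 * vy ^+ 2.
Proof.
move=> h1 h2; rewrite !ddD.
rewrite (ddM C1 (vx ^+ 2)) (ddM C1 (vy ^+ 2)).
rewrite (ddM (C2 * vx) vy) (ddM C2 vx).
rewrite ddx2 ddy2 ddx ddy h1 h2.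
by rewrite !mulr0 !addr0.
Qed.

Lemma ddQalpha : dd Qalpha = Qa.
Proof. by apply: ddQgen; rewrite ddC ?Eop_alpha ?Eop_beta. Qed.
Lemma ddQa : dd Qa = 0.
Proof.
rewrite /Qa (@ddQgen _ _ 0 0); first by rewrite !mul0r !addr0.
  by rewrite ddC Eop_a /cst.
by rewrite ddC Eop_b /cst.
Qed.

Lemma Eop_Dab : Eop Dab = 0.
Proof.
rewrite /Dab (@derB _ Eop Eop_D) !Eop_M Eop_a Eop_b Eop_alpha Eop_beta; ring.
Qed.

Lemma vy2 : vy ^+ 2 = ('X ^+ 2 : {poly P4})%:P.
Proof. by rewrite /vy rmorphXn. Qed.

Lemma Qa_coef2 : Qa`_2 = va%:P.
Proof.
rewrite /Qa /cst /vx vy2 !coefD -mulrA !coefCM coefMC coefX coefXn coefC /=.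
by rewrite mulr1 mul0r !mulr0 !addr0.
Qed.

Lemma Qa_coef0 : Qa`_0 = va%:P * 'X ^+ 2.
Proof.
rewrite /Qa /cst /vx vy2 !coefD -mulrA !coefCM coefMC coefX coefXn coefC /=.
by rewrite mulr0 mul0r mulr0 !add0r.
Qed.

Lemma va_neq0 : va != 0.
Proof.
apply/eqP => h; have := congr1 (meval (fun _ : 'I_4 => (1 : int))) h.
by rewrite /va mevalXU meval0.
Qed.

Lemma Dab_neq0 : Dab != 0.
Proof.
apply/eqP => h.
have := congr1 (meval (fun i : 'I_4 => ((val i == 0)%N || (val i == 3)%N)%:R : int)) h.
rewrite /Dab /va /vb /valpha /vbeta mevalB !mevalM !mevalXU meval0.
have iv (k : nat) : (k < 4)%N -> \val (inord k : 'I_4) = k by move=> hk; apply: inordK.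
by rewrite !iv.
Qed.

Lemma cst_eq0 c : (cst c == 0) = (c == 0).
Proof. by rewrite /cst !polyC_eq0. Qed.

Lemma vx_neq0 : vx != 0.
Proof. by rewrite /vx polyX_eq0. Qed.

Lemma Qa_neq0 : Qa != 0.
Proof.
apply/eqP => h; have := Qa_coef2; rewrite h coef0 => /esym/eqP.
by rewrite polyC_eq0 (negbTE va_neq0).
Qed.

Lemma Qa_size : (3 <= size Qa)%N.
Proof.
rewrite leqNgt; apply/negP => hs.
have := Qa_coef2; rewrite nth_default // => /esym/eqP.
by rewrite polyC_eq0 (negbTE va_neq0).
Qed.

Lemma keyK j : forall (c0 : {poly P4}) (h : PXY), c0%:P * vx ^+ j = Qa * h -> c0 = 0.
Proof.
elim: j => [|j IH] c0 h.
  rewrite expr0 mulr1 => e.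
  case: (eqVneq h 0) => [h0|hn].
    by move: e; rewrite h0 mulr0 => /eqP; rewrite polyC_eq0 => /eqP.
  have := size_polyC_leq1 c0; rewrite e size_mul ?Qa_neq0 //.
  have := Qa_size; have : (0 < size h)%N by rewrite size_poly_gt0.
  move: (size Qa) (size h) => s1 s2; lia.
move=> e.
have h0 : h`_0 = 0.
  have := congr1 (fun p : PXY => p`_0) e; rewrite /= (coef0M Qa h) Qa_coef0 coefCM /vx coefXn /= mulr0.
  move=> /esym/eqP; rewrite mulf_eq0 mulf_eq0 polyC_eq0 (negbTE va_neq0) /=.
  by rewrite expf_eq0 polyX_eq0 andbF /= => /eqP.
have : root h 0 by rewrite /root horner_coef0 h0.
case/factor_theorem => h' eh; move: e; rewrite eh subr0 exprSr mulrA mulrA.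
move/(mulIf vx_neq0); exact: IH.
Qed.

Lemma cst0 : cst 0 = 0.
Proof. by rewrite /cst !polyC0. Qed.
Lemma cstD x y : cst (x + y) = cst x + cst y.
Proof. by rewrite /cst !rmorphD. Qed.
Lemma cstM x y : cst (x * y) = cst x * cst y.
Proof. by rewrite /cst !rmorphM. Qed.
Lemma cstB x y : cst (x - y) = cst x - cst y.
Proof. by rewrite /cst !rmorphB. Qed.
Lemma cstX x k : cst (x ^+ k) = cst x ^+ k.
Proof. by rewrite /cst !rmorphXn. Qed.
Lemma cstn k : cst k%:R = k%:R.
Proof. by rewrite /cst !rmorph_nat. Qed.

Lemma QaQalpha : cst va * Qalpha = cst valpha * Qa + cst Dab * vx * vy.
Proof.
rewrite /Qalpha /Qa /Dab cstB !cstM.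
move: (cst va) (cst vb) (cst valpha) (cst vbeta) => A B C D; ring.
Qed.

Lemma alg (R : comPzRingType) (C Qal Q a al B h : R) k :
  C * Qal ^+ k = Q * h -> a * Qal = al * Q + B -> exists g, C * B ^+ k = Q * g.
Proof.
move=> e e1.
have e3 := subrXX (al * Q + B) B k; rewrite addrK in e3.
exists (a ^+ k * h - C * al * \sum_(i < k) (al * Q + B) ^+ (k.-1 - i) * B ^+ i).
have -> : C * B ^+ k = C * (al * Q + B) ^+ k - C * ((al * Q + B) ^+ k - B ^+ k).
  by rewrite mulrBr opprB addrC subrK.
rewrite e3 -e1 exprMn.
have -> : C * (a ^+ k * Qal ^+ k) = a ^+ k * (C * Qal ^+ k) by ring.
rewrite e; move: (\sum_(i < k) _) => S; ring.
Qed.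

Lemma divK (c : P4) k (h : PXY) : cst c * Qalpha ^+ k = Qa * h -> c = 0.
Proof.
move=> e; have [g eg] := @alg _ _ _ _ _ _ _ _ _ e QaQalpha.
have e5 : cst c * (cst Dab * vx * vy) ^+ k = ((c * Dab ^+ k)%:P * 'X ^+ k)%:P * vx ^+ k.
  rewrite /cst /vy !exprMn !rmorphM !rmorphXn /=.
  move: (c%:P%:P : PXY) (Dab%:P%:P : PXY) (vx : PXY) (('X : {poly P4})%:P : PXY) => u v w z; ring.
move: eg; rewrite e5 => /keyK /eqP.
rewrite mulf_eq0 polyC_eq0 expf_eq0 polyX_eq0 andbF orbF mulf_eq0 expf_eq0 (negbTE Dab_neq0) andbF orbF.
by move=> /eqP.
Qed.

Lemma indep_gen (K : P4 -> PXY) (U Q : PXY)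
  (K0 : forall c, (K c == 0) = (c == 0)) (hQ : Q != 0)
  (hd : forall c k h, K c * U ^+ k = Q * h -> c = 0) m : forall c : nat -> P4,
  \sum_(s < m.+1) K (c s) * U ^+ (m - s) * Q ^+ s = 0 ->
  forall s, (s <= m)%N -> c s = 0.
Proof.
elim: m => [|m IH] c.
  rewrite big_ord_recl big_ord0 addr0 !expr0 !mulr1 => /eqP.
  by rewrite K0 => /eqP c0 s; rewrite leqn0 => /eqP ->.
rewrite big_ord_recl.
rewrite (eq_bigr (fun i : 'I_m.+1 => Q * (K (c i.+1) * U ^+ (m - i) * Q ^+ i))); last first.
  move=> i _; rewrite lift0 subSS exprS.
  move: (K _) (U ^+ _) (Q ^+ _) => u v w; ring.
rewrite -mulr_sumr.
move: (\sum_(i < m.+1) _) (IH (fun i => c i.+1)) => T IHc.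
rewrite subn0 expr0 mulr1 => e.
have c0 : c 0%N = 0.
  apply: (hd _ m.+1 (- T)); rewrite mulrN; apply/eqP; rewrite -addr_eq0; exact/eqP.
have : K (c 0%N) == 0 by rewrite K0 c0.
move/eqP => Kc0; move: e; rewrite Kc0 !mul0r add0r => /eqP; rewrite mulf_eq0 (negbTE hQ) /= => /eqP eT0.
by move=> [|s] hs //; apply: IHc.
Qed.

Lemma indep m : forall c : nat -> P4,
  \sum_(s < m.+1) cst (c s) * Qalpha ^+ (m - s) * Qa ^+ s = 0 ->
  forall s, (s <= m)%N -> c s = 0.
Proof. exact: (@indep_gen cst Qalpha Qa cst_eq0 Qa_neq0 divK m). Qed.

Lemma reg_aux (R : comPzRingType) (u v w Q : R) n :
  n%:R * u * v * (Q * w) = u * (v * Q *+ n) * w.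
Proof.
rewrite mulr_natl mulrnAr !mulrnAl; congr (_ *+ _); ring.
Qed.

Lemma core_gen (K : P4 -> PXY) (E : P4 -> P4) (d : PXY -> PXY) (U Q : PXY)
  (dD : forall x y, d (x + y) = d x + d y)
  (dM : forall x y, d (x * y) = d x * y + x * d y)
  (dK : forall c, d (K c) = K (E c))
  (KD : forall x y, K (x + y) = K x + K y)
  (KM : forall x y, K (x * y) = K x * K y)
  (Kn : forall k : nat, K k%:R = k%:R) (K0 : K 0 = 0)
  (dU : d U = Q) (dQ : d Q = 0)
  (ind : forall m (c : nat -> P4), \sum_(s < m.+1) K (c s) * U ^+ (m - s) * Q ^+ s = 0 ->
         forall s, (s <= m)%N -> c s = 0)
  m (W V : PXY) (D : P4) (ED : E (D ^+ m) = 0) (P : nat -> P4) :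
  W != 0 -> d W = 0 -> d V = 0 ->
  W * (\sum_(r < m.+1) K (P r) * U ^+ (m - r) * Q ^+ r) = K (D ^+ m) * V ->
  forall r, (r < m)%N -> (m - r)%:R * P r = - E (P r.+1).
Proof.
move=> Wn dW dV e r hr.
have h1 := congr1 d e.
rewrite dM dW mul0r add0r dM dK ED K0 mul0r dV mulr0 addr0 in h1.
move/eqP: h1; rewrite mulf_eq0 (negbTE Wn) /= => /eqP h1.
rewrite (@der_sum _ d dD) in h1.
pose cc s := E (P s) + (if s is s'.+1 then (m - s')%:R * P s' else 0).
have h2 : \sum_(s < m.+1) K (cc s) * U ^+ (m - s) * Q ^+ s = 0.
  apply: (etrans _ h1).
  rewrite (eq_bigr (fun s : 'I_m.+1 => K (E (P s)) * U ^+ (m - s) * Q ^+ s +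
     K (if (s : nat) is s'.+1 then (m - s')%:R * P s' else 0) * U ^+ (m - s) * Q ^+ s)); last first.
    by move=> s _; rewrite /cc KD !mulrDl.
  rewrite [in RHS](eq_bigr (fun s : 'I_m.+1 => K (E (P s)) * U ^+ (m - s) * Q ^+ s +
     K (P s) * (U ^+ (m - s).-1 * Q *+ (m - s)) * Q ^+ s)); last first.
    move=> s _; rewrite !dM dK (@derX _ d dM U) (@derX _ d dM Q) dU dQ.
    by rewrite mulr0 mul0rn mulr0 addr0 mulrDl.
  rewrite !big_split /=; congr (_ + _).
  rewrite big_ord_recl K0 !mul0r add0r big_ord_recr /= subnn mulr0n mulr0 mul0r addr0.
  apply: eq_bigr => i _.
  rewrite add0n (_ : bump 0 i = i.+1) // KM Kn subnS exprS -mulr_natr mul1r.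
  exact: reg_aux.
have := ind m cc h2 r.+1 hr.
rewrite /cc addrC => /eqP; rewrite addr_eq0 => /eqP.
done.
Qed.

Lemma EDm m : Eop (Dab ^+ m) = 0.
Proof. by rewrite (@derX _ Eop Eop_M) Eop_Dab mulr0 mul0rn. Qed.

Lemma xpy_neq0 : vx + vy != 0.
Proof.
apply/eqP => h; have := congr1 (fun p : PXY => p`_1) h.
rewrite /= coefD /vx /vy coefX coefC coef0 /= addr0 => /eqP; by rewrite oner_eq0.
Qed.
Lemma xmy_neq0 : vx - vy != 0.
Proof.
apply/eqP => h; have := congr1 (fun p : PXY => p`_1) h.
rewrite /= coefB /vx /vy coefX coefC coef0 /= subr0 => /eqP; by rewrite oner_eq0.
Qed.

Lemma ddXn (p : PXY) k : dd p = 0 -> dd (p ^+ k) = 0.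
Proof. by move=> h; rewrite (@derX _ dd ddM) h mulr0 mul0rn. Qed.

Theorem theorem8p2 (n : nat) : (1 <= n)%N ->
  (forall Psi : nat -> P4, is_Psi n Psi ->
     forall r : nat, (r < n./2)%N ->
       (n./2 - r)%:R * Psi r = - Eop (Psi r.+1)) /\
  (forall Phi : nat -> P4, is_Phi n Phi ->
     forall r : nat, (r < n.-1./2)%N ->
       (n.-1./2 - r)%:R * Phi r = - Eop (Phi r.+1)).
Proof.
have dxy : dd (vx + vy) = 0 by rewrite ddD ddx ddy addr0.
have dxmy : dd (vx - vy) = 0 by rewrite (@derB _ dd ddD) ddx ddy subr0.
move=> _; split => P hP r hr.
  apply: (@core_gen cst Eop dd Qalpha Qa ddD ddM ddC cstD cstM cstn cst0 ddQalpha ddQa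
            indep (n./2) _ _ Dab (EDm _) P _ _ _ hP r hr).
  - by rewrite expf_neq0 // xpy_neq0.
  - exact: ddXn.
  - by rewrite ddD !ddXn ?ddx ?ddy ?addr0.
apply: (@core_gen cst Eop dd Qalpha Qa ddD ddM ddC cstD cstM cstn cst0 ddQalpha ddQa
          indep (n.-1./2) _ _ Dab (EDm _) P _ _ _ hP r hr).
- by rewrite mulf_neq0 ?expf_neq0 ?xpy_neq0 ?xmy_neq0.
- by rewrite ddM dxmy (@ddXn _ _ dxy) mul0r mulr0 addr0.
- by rewrite (@derB _ dd ddD) !ddXn ?ddx ?ddy ?subr0.
Qed.
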